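(* Let $\beta>1$ be a real number. If every $x\in I_\beta\cap\mathbb{Q}(\beta)$ has an eventually periodic $(-\beta)$-expansion $d_{-\beta}(x)$, then $\beta$ is either a Pisot number or a Salem number.
   Context: For $\beta>1$ put $l_\beta=-\frac{\beta}{\beta+1}$, $r_\beta=\frac{1}{\beta+1}$ and $I_\beta=[l_\beta,r_\beta)$. Define $T:I_\beta\to I_\beta$ by $T(x)=-\beta x-\lfloor -\beta x-l_\beta\rfloor$. The $(-\beta)$-expansion of $x\in I_\beta$ is the infinite word $d_{-\beta}(x)=x_1x_2x_3\cdots$ with $x_i=\lfloor -\beta T^{i-1}(x)-l_\beta\rfloor$ for $i\ge1$; then $x=\sum_{i\ge1}x_i(-\beta)^{-i}$. $\mathbb{Q}(\beta)$ denotes the smallest subfield of $\mathbb{C}$ containing $\beta$. A Pisot number is an algebraic integer $\beta>1$ all of whose other conjugates have modulus $<1$; a Salem number is an algebraic integer $\beta>1$ all of whose other conjugates have modulus $\le1$ and which is not a Pisot number. *)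

(* Defs.v *)
From HB Require Import structures.
From mathcomp Require Import all_boot all_order all_algebra.
From mathcomp Require Import complex.
From mathcomp Require Import reals.
Set Implicit Arguments. Unset Strict Implicit. Unset Printing Implicit Defensive.
Import Order.TTheory GRing.Theory Num.Theory.
Local Open Scope ring_scope.

Section NegBeta.
Variable R : realType.

Definition lbeta (beta : R) : R := - (beta / (beta + 1)).
Definition rbeta (beta : R) : R := 1 / (beta + 1).

Definition Tneg (beta x : R) : R :=
  - beta * x - (Num.floor (- beta * x - lbeta beta))%:~R.

(* i-th digit (i >= 1) of d_{-beta}(x): x_i = floor(-beta T^{i-1}(x) - l_beta);
   we index from 0: negdigit beta x i = x_{i+1}. *)
Definition negdigit (beta x : R) (i : nat) : int :=
  Num.floor (- beta * (iter i (Tneg beta) x) - lbeta beta).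

Definition eventually_periodic (d : nat -> int) : Prop :=
  exists N p : nat, (0 < p)%N /\ forall i, (N <= i)%N -> d (i + p)%N = d i.

(* x belongs to Q(beta) (the smallest subfield containing beta; as beta is real,
   it is the set of values P(beta)/Q(beta) of rational functions over Q) *)
Definition in_Qbeta (beta x : R) : Prop :=
  exists P Q : {poly rat}, (map_poly ratr Q).[beta] != 0 /\
    x = (map_poly ratr P).[beta] / (map_poly ratr Q).[beta].

Definition algebraic_integer (beta : R) : Prop :=
  exists p : {poly int}, p \is monic /\ root (map_poly intr p) beta.

(* z is a (complex) conjugate of beta: a root of the minimal polynomial of beta
   over Q, i.e. of an irreducible rational polynomial vanishing at beta. *)
Definition conjugate (beta : R) (z : complex R) : Prop :=
  exists q : {poly rat}, irreducible_poly q /\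
    root (map_poly ratr q) beta /\ root (map_poly ratr q) z.

Definition Pisot (beta : R) : Prop :=
  algebraic_integer beta /\ 1 < beta /\
  forall z : complex R, conjugate beta z -> z != (beta%:C)%C -> `|z| < 1.

Definition Salem (beta : R) : Prop :=
  [/\ algebraic_integer beta, 1 < beta,
      (forall z : complex R, conjugate beta z -> z != (beta%:C)%C -> `|z| <= 1)
    & ~ Pisot beta].

End NegBeta.

(* Main.v *)
Require Import Defs.
From HB Require Import structures.
From mathcomp Require Import all_boot all_order all_algebra.
From mathcomp Require Import complex.
From mathcomp Require Import reals.
From mathcomp Require Import ring lra.
From Stdlib Require Import Classical.
Import Order.TTheory GRing.Theory Num.Theory.
Local Open Scope ring_scope.
Ltac lra' := repeat match goal with H : is_true _ |- _ => revert H end; lra.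
Ltac nra' := repeat match goal with H : is_true _ |- _ => revert H end; nra.

Lemma minpoly_root (R : realType) (beta : R) (z : R[i]) (q G : {poly rat}) :
  irreducible_poly q -> root (map_poly ratr q) beta -> root (map_poly ratr q) z ->
  root (map_poly ratr G) beta -> root (map_poly ratr G) z.
Proof.
move=> [sq irr] qb qz Gb.
have hg : root (map_poly (ratr : rat -> R) (gcdp q G)) beta.
  by rewrite gcdp_map root_gcd qb Gb.
have sg : size (gcdp q G) != 1%N.
  apply/negP => /eqP s1.
  have := hg; rewrite -(size_map_poly (ratr : {rmorphism rat -> R})) in s1.
  move: s1 => /eqP /size_poly1P [c c0 ->]; rewrite rootC; apply/negP.
  exact: c0.
have := irr _ sg (dvdp_gcdl q G) => eqg.
have : q %| G by rewrite -(eqp_dvdl _ eqg) dvdp_gcdr.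
move=> /dvdpP [h ->]; rewrite rmorphM /= rootM qz orbT //.
Qed.


Section Orbit.
Variable R : realType.
Variable beta : R.
Hypothesis hb : 1 < beta.

Lemma rbetaE : rbeta beta = lbeta beta + 1.
Proof.
rewrite /rbeta /lbeta; have h : beta + 1 != 0 by apply: lt0r_neq0; lra'.
by field.
Qed.

Lemma lbeta_bounds : -1 < lbeta beta < 0.
Proof.
rewrite /lbeta; have h : 0 < beta + 1 by lra'.
apply/andP; split.
  rewrite ltrN2 ltr_pdivrMr //; lra'.
rewrite oppr_lt0 divr_gt0 //; lra'.
Qed.

Lemma T_range y : lbeta beta <= Tneg beta y < rbeta beta.
Proof.
rewrite rbetaE /Tneg.
set w := - beta * y - lbeta beta.
have h1 := floor_le w; have h2 := floorD1_gt w.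
rewrite intrD in h2.
have -> : - beta * y = w + lbeta beta by rewrite /w; ring.
apply/andP; split; lra'.
Qed.

Lemma iter_range x n : lbeta beta <= x < rbeta beta ->
  lbeta beta <= iter n (Tneg beta) x < rbeta beta.
Proof. by case: n => [|n] //= _; exact: T_range. Qed.

Lemma bernoulli k : 1 + k%:R * (beta - 1) <= beta ^+ k.
Proof.
elim: k => [|k IH]; first by rewrite mul0r addr0 expr0.
rewrite exprS -natr1.
have hk : 0 <= k%:R :> R by [].
have h1 : 0 <= (beta - 1) * (beta ^+ k - (1 + k%:R * (beta - 1))).
  apply: mulr_ge0; lra'.
have h2 : 0 <= k%:R * ((beta - 1) * (beta - 1)) :> R.
  apply: mulr_ge0 => //; apply: mulr_ge0; lra'.
nra'.
Qed.

Lemma iter_diff u v : (forall k, negdigit beta u k = negdigit beta v k) ->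
  forall k, iter k (Tneg beta) u - iter k (Tneg beta) v = (- beta) ^+ k * (u - v).
Proof.
move=> hd; elim=> [|k IH]; first by rewrite expr0 mul1r.
rewrite /= /Tneg.
have := hd k; rewrite /negdigit => ->.
rewrite exprS -mulrA -IH; ring.
Qed.

Lemma same_digits u v : (forall k, negdigit beta u k = negdigit beta v k) -> u = v.
Proof.
move=> hd; apply/eqP; rewrite -subr_eq0; apply/negP => /negP nz.
have pz : 0 < `|u - v| by rewrite normr_gt0.
have M0 : 0 <= (`|u - v| * (beta - 1))^-1.
  rewrite invr_ge0 mulr_ge0 //; lra'.
have hB := archi_boundP M0.
set k := Num.bound _ in hB.
have := iter_diff _ _ hd k.+1.
have r1 := T_range (iter k (Tneg beta) u).
have r2 := T_range (iter k (Tneg beta) v).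
rewrite rbetaE in r1 r2.
move=> /(congr1 Num.norm); rewrite normrM normrX normrN /=.
have bk := bernoulli k.+1.
have hb0 : `|beta| = beta by rewrite ger0_norm //; lra'.
rewrite hb0 => e.
have : `|Tneg beta (iter k (Tneg beta) u) - Tneg beta (iter k (Tneg beta) v)| < 1.
  rewrite ltr_norml; apply/andP; split; lra'.
rewrite e.
have hk : (k%:R : R) < k.+1%:R by rewrite ltr_nat.
have P : 0 < `|u - v| * (beta - 1) by apply: mulr_gt0 => //; lra'.
have e1 : (`|u - v| * (beta - 1))^-1 * (`|u - v| * (beta - 1)) = 1.
  by rewrite mulVf // gt_eqF.
have h3 : 0 < (k%:R - (`|u - v| * (beta - 1))^-1) * (`|u - v| * (beta - 1)).
  apply: mulr_gt0 => //; lra'.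
have h4 : 0 <= `|u - v| * (beta ^+ k.+1 - (1 + k.+1%:R * (beta - 1))).
  apply: mulr_ge0; lra'.
nra'.
Qed.

Lemma periodic_orbit x : eventually_periodic (negdigit beta x) ->
  exists N p : nat, (0 < p)%N /\
    iter (N + p) (Tneg beta) x = iter N (Tneg beta) x.
Proof.
move=> [N [p [p0 hp]]]; exists N, p; split => //.
apply: same_digits => k.
rewrite /negdigit -!iterD.
have := hp (k + N)%N (leq_addl _ _).
rewrite /negdigit -addnA => ->.
by [].
Qed.

End Orbit.

Fixpoint Zs (A : {poly int}) (K : int) (d : nat -> int) (n : nat) : {poly int} :=
  if n is n'.+1 then - 'X * Zs A K d n' - (K * d n')%:P else A.

Lemma Zs_eval (S : comNzRingType) (t : S) A K d n :
  (map_poly intr (Zs A K d n.+1)).[t] =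
  - t * (map_poly intr (Zs A K d n)).[t] - (K * d n)%:~R.
Proof.
by rewrite /= rmorphB rmorphM rmorphN /= map_polyX map_polyC /= !hornerE.
Qed.

Lemma map_ratr_int (S : unitRingType) (G : {poly int}) :
  map_poly (ratr : rat -> S) (map_poly intr G) = map_poly intr G.
Proof.
rewrite -map_poly_comp_id0; last by rewrite (ratr_int S 0).
apply: eq_map_poly => z /=; exact: ratr_int.
Qed.

Lemma Zs_size K d n : (size (Zs 1 K d n - (- 'X) ^+ n)%R <= n)%N.
Proof.
elim: n => [|n IH]; first by rewrite /= expr0 subrr size_poly0.
have -> : Zs 1 K d n.+1 - (- 'X) ^+ n.+1 =
   - 'X * (Zs 1 K d n - (- 'X) ^+ n) - (K * d n)%:P.
  by rewrite /= exprS; ring.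
apply: leq_trans (size_add _ _) _; rewrite size_opp geq_max; apply/andP; split.
  apply: leq_trans (size_mul_leq _ _) _.
  by rewrite size_opp size_polyX /=.
by apply: leq_trans (size_polyC_leq1 _) _.
Qed.

Lemma Zs_monic K d N p : (0 < p)%N ->
  ((-1) ^+ (N + p))%:P * (Zs 1 K d (N + p) - Zs 1 K d N) \is monic.
Proof.
move=> p0; set n := (N + p)%N.
set E1 := Zs 1 K d n - (- 'X) ^+ n.
set E2 := Zs 1 K d N - (- 'X) ^+ N.
have eX : (- 'X : {poly int}) ^+ n = ((-1) ^+ n)%:P * 'X^n.
  by rewrite polyC_exp polyCN polyC1 -exprMn mulN1r.
have ec : ((-1) ^+ n * (-1) ^+ n : int) = 1.
  by rewrite -exprMn mulrNN mulr1 expr1n.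
have -> : ((-1) ^+ n)%:P * (Zs 1 K d n - Zs 1 K d N) =
    'X^n + ((-1) ^+ n)%:P * (E1 - Zs 1 K d N).
  rewrite /E1 eX.
  have ecP : ((-1) ^+ n)%:P * ((-1) ^+ n)%:P = 1 :> {poly int}.
    by rewrite -polyCM ec.
  transitivity (((-1) ^+ n)%:P * (Zs 1 K d n - Zs 1 K d N) +
     ('X^n - (((-1) ^+ n)%:P * ((-1) ^+ n)%:P) * 'X^n)); last by ring.
  by rewrite ecP mul1r subrr addr0.
have s1 := Zs_size K d n.
have s2 := Zs_size K d N.
have sZN : (size (Zs 1 K d N)%R <= n)%N.
  have -> : Zs 1 K d N = E2 + (- 'X) ^+ N by rewrite /E2 subrK.
  apply: leq_trans (size_add _ _) _; rewrite geq_max; apply/andP; split.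
    by apply: leq_trans s2 _; rewrite /n leq_addr.
  apply: leq_trans (size_exp_leq _ _) _.
  by rewrite size_opp size_polyX /= mul1n /n -addn1 leq_add2l.
rewrite monicE lead_coefDl ?lead_coefXn //.
rewrite size_polyXn ltnS.
have hs : (size (E1 - Zs 1 K d N)%R <= n)%N.
  apply: leq_trans (size_add _ _) _; rewrite size_opp geq_max sZN andbT.
  exact: s1.
by rewrite size_Cmul // expf_neq0 // oppr_eq0 oner_eq0.
Qed.


Section Cx.
Local Open Scope complex_scope.
Variable R : realType.
Definition nc (z : R[i]) : R := Normc.normc z.

Lemma nc_ge0 (z : R[i]) : 0 <= nc z.
Proof. by case: z => a b; rewrite /nc /Normc.normc sqrtr_ge0. Qed.

Lemma normC_nc (z : R[i]) : `|z| = (nc z)%:C.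
Proof. by case: z. Qed.

Lemma nc_real (r : R) : nc (r%:C) = `|r|.
Proof. by rewrite /nc /Normc.normc /= expr0n /= addr0 sqrtr_sqr. Qed.

Lemma nc_add (x y : R[i]) : nc (x + y) <= nc x + nc y.
Proof. exact: le_normcD. Qed.

Lemma nc_mul (x y : R[i]) : nc (x * y) = nc x * nc y.
Proof. exact: Normc.normcM. Qed.

Lemma nc_opp (x : R[i]) : nc (- x) = nc x.
Proof. exact: normcN. Qed.

Lemma int_C (k : int) : (k%:~R : R[i]) = (k%:~R : R)%:C.
Proof. by rewrite rmorph_int. Qed.

Lemma growth (z : R[i]) (w : nat -> R[i]) (B : R) :
  1 < nc z -> (forall n, nc (w n.+1 + z * w n) <= B) ->
  B < (nc z - 1) * nc (w 0%N) ->
  forall N p, (0 < p)%N -> w (N + p)%N != w N.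
Proof.
move=> z1 hB h0.
have step n : B < (nc z - 1) * nc (w n) ->
    nc (w n) < nc (w n.+1) /\ B < (nc z - 1) * nc (w n.+1).
  move=> hn.
  have e : z * w n = (w n.+1 + z * w n) + - w n.+1.
    by rewrite [w n.+1 + _]addrC addrK.
  have := nc_add (w n.+1 + z * w n) (- w n.+1); rewrite -e nc_mul nc_opp => h1.
  have h2 := hB n.
  have h3 := nc_ge0 (w n).
  have lt1 : nc (w n) < nc (w n.+1) by nra'.
  split => //.
  have h4 : 0 < (nc z - 1) * (nc (w n.+1) - nc (w n)).
    apply: mulr_gt0; lra'.
  lra'.
have inv n : B < (nc z - 1) * nc (w n).
  by elim: n => [//|n IH]; case: (step n IH).
have mono n k : nc (w n) < nc (w (n + k.+1)%N).
  elim: k => [|k IH]; first by rewrite addn1; case: (step n (inv n)).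
  rewrite addnS; case: (step _ (inv (n + k.+1)%N)) => h _; exact: lt_trans IH h.
move=> N p p0; apply/eqP => e.
case: p p0 e => // p _ e.
by have := mono N p; rewrite e ltxx.
Qed.

End Cx.


Lemma Zs_orbit (R : realType) (beta x : R) (A : {poly int}) (K : int) :
  (map_poly intr A).[beta] = K%:~R * x -> forall n,
  (map_poly intr (Zs A K (negdigit beta x) n)).[beta] =
    K%:~R * iter n (Tneg beta) x.
Proof.
move=> hA; elim=> [//|n IH].
rewrite Zs_eval IH.
have -> : iter n.+1 (Tneg beta) x =
   - beta * iter n (Tneg beta) x - (negdigit beta x n)%:~R by [].
rewrite intrM; ring.
Qed.

Lemma digit_bound (R : realType) (beta x : R) n : 1 < beta ->
  lbeta beta <= x < rbeta beta -> `|(negdigit beta x n)%:~R| <= beta + 1.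
Proof.
move=> hb xin.
have r1 := iter_range R beta hb x n xin.
have r2 := iter_range R beta hb x n.+1 xin.
have lb := lbeta_bounds R beta hb.
have rb := rbetaE R beta.
have -> : (negdigit beta x n)%:~R =
    - beta * iter n (Tneg beta) x - iter n.+1 (Tneg beta) x.
  by rewrite /= /Tneg /negdigit; ring.
set y := iter n (Tneg beta) x in r1 *.
set y' := iter n.+1 (Tneg beta) x in r2 *.
have h1 : 0 <= beta * (1 - y) by apply: mulr_ge0; lra'.
have h2 : 0 <= beta * (1 + y) by apply: mulr_ge0; lra'.
rewrite ler_norml; apply/andP; split; lra'.
Qed.

Section Main.
Local Open Scope complex_scope.
Variable R : realType.
Local Notation nc := (@nc R).

Lemma algint_part (beta : R) (hbeta : 1 < beta) :
  (forall x : R, lbeta beta <= x -> x < rbeta beta -> in_Qbeta beta x ->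
     eventually_periodic (negdigit beta x)) ->
  algebraic_integer beta.
Proof.
move=> hper.
have hb1 : 0 <= beta + 1 by lra'.
have hK := archi_boundP hb1; set K := Num.bound _ in hK.
have K0 : 0 < K%:R :> R by lra'.
set x := (K%:R : R)^-1.
have lb := lbeta_bounds R beta hbeta.
have xin : lbeta beta <= x < rbeta beta.
  have x0 : 0 < x by rewrite invr_gt0.
  apply/andP; split; first lra'.
  rewrite /x /rbeta mul1r ltf_pV2 ?posrE; lra'.
have hq : in_Qbeta beta x.
  exists 1, (K%:R)%:P; rewrite !rmorph1 map_polyC /= !hornerE.
  rewrite ratr_nat; split; first by rewrite gt_eqF.
  by rewrite /x.
move/andP: (xin) => [xl xr].
have [N [p [p0 e]]] := periodic_orbit R beta hbeta x (hper x xl xr hq).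
exists (((-1) ^+ (N + p))%:P *
   (Zs 1 (K%:Z) (negdigit beta x) (N + p) - Zs 1 (K%:Z) (negdigit beta x) N)).
split; first exact: Zs_monic.
have hA : (map_poly (intr : int -> R) 1).[beta] = (K%:Z)%:~R * x.
  by rewrite rmorph1 hornerE /x pmulrn mulfV // gt_eqF.
rewrite /root rmorphM rmorphB /= hornerM hornerD hornerN !(Zs_orbit _ _ _ _ _ hA) e.
by rewrite subrr mulr0.
Qed.



Lemma conj_part (beta : R) (hbeta : 1 < beta) :
  (forall x : R, lbeta beta <= x -> x < rbeta beta -> in_Qbeta beta x ->
     eventually_periodic (negdigit beta x)) ->
  forall z : R[i], conjugate beta z -> z != beta%:C -> `|z| <= 1.
Proof.
move=> hper z [q [qirr [qb qz]]] zb.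
rewrite normC_nc lecR leNgt; apply/negP => z1.
set nz := nc z in z1 *.
set dl := nc (z - beta%:C).
have dl0 : 0 < dl.
  have dn : dl != 0.
    apply/negP => /eqP /Normc.eq0_normc /eqP.
    by rewrite subr_eq0 (negbTE zb).
  by rewrite lt_def dn nc_ge0.
have lb := lbeta_bounds R beta hbeta.
have rb := rbetaE R beta.
have X0 : 0 <= 2 * (beta + 1) / ((nz - 1) * dl).
  apply: divr_ge0; first lra'.
  apply: mulr_ge0; lra'.
have hm := archi_boundP X0; set m := Num.bound _ in hm.
have hm' : 2 * (beta + 1) < (nz - 1) * dl * m%:R.
  have P0 : 0 < (nz - 1) * dl.
    apply: mulr_gt0 => //; lra'.
  by move: hm; rewrite ltr_pdivrMr // [m%:R * _]mulrC.
have Y0 : 0 <= 2 / dl + m%:R * (beta + 1).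
  apply: addr_ge0; first by apply: divr_ge0 => //; apply: ltW.
  apply: mulr_ge0 => //; lra'.
have hK := archi_boundP Y0; set K := Num.bound _ in hK.
have m0 : 0 <= m%:R :> R by [].
have hd2 : 0 <= 2 / dl by apply: divr_ge0 => //; apply: ltW.
have hm2 : 0 <= m%:R * (beta + 1) by apply: mulr_ge0 => //; lra'.
have hK1 : 2 < K%:R * dl.
  have : 2 / dl < K%:R by lra'.
  by rewrite ltr_pdivrMr.
have hK2 : m%:R * (beta + 1) < K%:R by lra'.
have K0 : 0 < K%:R :> R by lra'.
set f := Num.floor (beta * K%:R).
have f1 := floor_le (beta * K%:R); have f2 := floorD1_gt (beta * K%:R).
rewrite intrD in f2; rewrite -/f in f1 f2.
set A : {poly int} := (m%:Z)%:P * ((K%:Z)%:P * 'X - f%:P).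
set x := m%:R * (beta * K%:R - f%:~R) / K%:R.
have Ax : (map_poly (intr : int -> R) A).[beta] = (K%:Z)%:~R * x.
  rewrite /A rmorphM rmorphB rmorphM /= !map_polyC map_polyX /= !hornerE /x.
  rewrite !pmulrn /=; field; exact: lt0r_neq0.
have xK : x * K%:R = m%:R * (beta * K%:R - f%:~R).
  rewrite /x; field; exact: lt0r_neq0.
have xin : lbeta beta <= x < rbeta beta.
  have x0 : 0 <= x.
    rewrite /x; apply: divr_ge0 => //; apply: mulr_ge0 => //; lra'.
  apply/andP; split; first lra'.
  have er : rbeta beta * (beta + 1) = 1.
    rewrite /rbeta; field; apply: lt0r_neq0; lra'.
  rewrite ltNge; apply/negP => hx.
  have h1 : 0 <= (x - rbeta beta) * (K%:R * (beta + 1)).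
    apply: mulr_ge0; first lra'.
    apply: mulr_ge0; lra'.
  have h2 : 0 <= m%:R * (beta + 1) * (1 - (beta * K%:R - f%:~R)).
    apply: mulr_ge0 => //; lra'.
  nra'.
have hq : in_Qbeta beta x.
  exists (map_poly intr A), (K%:R)%:P; rewrite map_ratr_int map_polyC /= !hornerE.
  rewrite ratr_nat; split; first by rewrite gt_eqF.
  rewrite Ax -pmulrn /=; field; exact: lt0r_neq0.
move/andP: (xin) => [xl xr].
have [N [p [p0 e]]] := periodic_orbit R beta hbeta x (hper x xl xr hq).
set d := negdigit beta x.
set G := Zs A (K%:Z) d (N + p) - Zs A (K%:Z) d N.
have Gb : root (map_poly (ratr : rat -> R) (map_poly intr G : {poly rat})) beta.
  rewrite map_ratr_int /root /G rmorphB /= hornerD hornerN.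
  by rewrite !(Zs_orbit _ _ _ _ _ Ax) e subrr.
have Gz := minpoly_root _ _ _ _ _ qirr qb qz Gb.
rewrite map_ratr_int /root /G rmorphB /= hornerD hornerN subr_eq0 in Gz.
set w := fun n => (map_poly (intr : int -> R[i]) (Zs A (K%:Z) d n)).[z].
have hB : forall n, nc (w n.+1 + z * w n) <= K%:R * (beta + 1).
  move=> n; rewrite /w Zs_eval.
  rewrite addrC mulNr addrA subrr add0r nc_opp int_C nc_real intrM normrM.
  rewrite -pmulrn normr_nat ler_pM2l //.
  exact: digit_bound _ _ _ _ hbeta xin.
have h0 : K%:R * (beta + 1) < (nz - 1) * nc (w 0%N).
  rewrite /w /= /A rmorphM rmorphB rmorphM /= !map_polyC map_polyX /= !hornerE.
  rewrite -!pmulrn.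
  set v : R := beta * K%:R - f%:~R.
  have ev : K%:R * z - f%:~R = K%:R * (z - beta%:C) + v%:C.
    by rewrite /v rmorphB rmorphM /= rmorph_nat -int_C; ring.
  have nat_C (k : nat) : (k%:R : R[i]) = (k%:R : R)%:C by rewrite rmorph_nat.
  set W := nc (K%:R * z - f%:~R).
  have hW : nc (K%:R * (z - beta%:C)) <= W + `|v|.
    rewrite -nc_real -(nc_opp R v%:C).
    have -> : K%:R * (z - beta%:C) = (K%:R * z - f%:~R) + - v%:C by rewrite ev addrK.
    exact: nc_add.
  rewrite nc_mul nat_C nc_real normr_nat in hW.
  rewrite nc_mul -/W nat_C nc_real normr_nat.
  have v0 : 0 <= v by rewrite /v; lra'.
  have v1 : v < 1 by rewrite /v; lra'.
  rewrite ger0_norm // -/dl in hW.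
  have W0 : 0 <= W := nc_ge0 R _.
  have a0 : 0 < nz - 1 by lra'.
  have q1 : 0 <= (nz - 1) * m%:R * (W - (K%:R * dl - 1)).
    apply: mulr_ge0; first by apply: mulr_ge0 => //; lra'.
    lra'.
  have q2 : 0 <= (nz - 1) * m%:R * (K%:R * dl - 2).
    apply: mulr_ge0; first by apply: mulr_ge0 => //; lra'.
    lra'.
  have q3 : 0 < K%:R * ((nz - 1) * dl * m%:R - 2 * (beta + 1)).
    apply: mulr_gt0 => //; lra'.
  nra'.
have := @growth R z w (K%:R * (beta + 1)) z1 hB h0 N p p0.
by rewrite /w (eqP Gz) eqxx.
Qed.

End Main.

Theorem theorem3 (R : realType) (beta : R) (hbeta : 1 < beta) :
  (forall x : R, lbeta beta <= x -> x < rbeta beta -> in_Qbeta beta x ->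
     eventually_periodic (negdigit beta x)) ->
  Pisot beta \/ Salem beta.
Proof.
move=> hper.
have ai := algint_part _ _ hbeta hper.
have cb := conj_part _ _ hbeta hper.
case: (classic (Pisot beta)) => hP; first by left.
by right; split.
Qed.
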